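(* The function $R:\Sigma^n\to\Sigma^n$ is bijective.
   Context: Let $k\ge 2$, $\Sigma=\{0,\dots,k-1\}$ with arithmetic modulo $k$, $n\ge 1$, and $s=s[0]\cdots s[n-1]\in\Sigma^n$. For an integer $j$, $ICR_j(s)=s[1]\cdots s[n-1](s[0]+j)$; each $ICR_j$ is a bijection of $\Sigma^n$. Let $\mathbf N$ be the set of cycles (orbits) of the permutation $ICR_1$ of $\Sigma^n$; $orbit(s)$ is the cycle containing $s$. Let $\mathbf G$ be the directed graph on $\mathbf N$ with an arc $(\mathcal U,\mathcal V)$ iff some $s\in\mathcal U$ has $ICR_0(s)\in\mathcal V$. Let $\mathbf T$ be a directed spanning tree of $\mathbf G$ rooted at $\mathcal R\in\mathbf N$ (arcs from parent to child), with parent map $parent$ on $\mathbf N\setminus\{\mathcal R\}$; the depth of a cycle is its distance from the root (root has depth $0$). For each $\mathcal U\ne\mathcal R$, a representative $rep(\mathcal U)$ is a fixed node $s\in\mathcal U$ with $ICR_0^{-1}(s)\in parent(\mathcal U)$ and $s[n-1]\equiv \text{depth}(\mathcal U)\pmod k$ (such a node is assumed to exist and one is fixed). $\mathrm{Reps}$ is the set of all representatives. Define $R(s)=ICR_0(s)$ if $ICR_0(s)\in\mathrm{Reps}$; $R(s)=ICR_2(s)$ if $ICR_1(s)\in\mathrm{Reps}$; $R(s)=ICR_1(s)$ otherwise (these cases do not conflict). *)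

(* Defs.v *)
From mathcomp Require Import all_boot all_algebra.
Set Implicit Arguments. Unset Strict Implicit. Unset Printing Implicit Defensive.
Import GRing.Theory.
Local Open Scope ring_scope.

(* Strings of length n over Sigma = Z/kZ (k >= 2 assumed in the theorem). *)
Definition word (n k : nat) := (n.-tuple 'Z_k)%type.

(* ICR_j(s) = s[1] ... s[n-1] (s[0] + j)  (for n >= 1). *)
Definition icr (n k : nat) (j : nat) (s : word n k) : word n k :=
  [tuple nth 0 (rcons (behead s) (head 0 s + j%:R)) i | i < n].

Definition orbit_icr (n k : nat) (s : word n k) : {set word n k} :=
  [set t | fconnect (@icr n k 1) s t].

Definition is_cycle (n k : nat) (U : {set word n k}) : bool :=
  [exists s, U == orbit_icr s].

Definition arcG (n k : nat) (U V : {set word n k}) : bool :=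
  [exists s, (s \in U) && (icr 0 s \in V)].

Definition Reps (n k : nat) (Root : {set word n k})
  (rep : {set word n k} -> word n k) : {set word n k} :=
  [set rep U | U in [set U : {set word n k} | is_cycle U && (U != Root)]].

Definition Rsucc (n k : nat) (Root : {set word n k})
  (rep : {set word n k} -> word n k) (s : word n k) : word n k :=
  if icr 0 s \in Reps Root rep then icr 0 s
  else if icr 1 s \in Reps Root rep then icr 2 s
  else icr 1 s.

(* Main.v *)
Require Import Defs.
From mathcomp Require Import ring.
From mathcomp Require Import all_boot all_algebra.
Set Implicit Arguments. Unset Strict Implicit. Unset Printing Implicit Defensive.
Import GRing.Theory.
Local Open Scope ring_scope.

Section H.
Variables (k n : nat) (hn : (0 < n)%N).

Lemma icr_val j (s : word n k) :
  val (icr j s) = rcons (behead s) (head 0 s + j%:R).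
Proof.
apply: (@eq_from_nth _ 0).
  by rewrite size_tuple size_rcons size_behead size_tuple prednK.
move=> i; rewrite size_tuple => hi.
rewrite /icr /= (nth_map (Ordinal hi)) ?size_enum_ord //.
by rewrite nth_enum_ord.
Qed.

Lemma icr_eq i j (s t : word n k) :
  (icr i s == icr j t) = (behead s == behead t) && (head 0 s + i%:R == head 0 t + j%:R).
Proof.
apply/eqP/andP => [/(congr1 val)|[/eqP h1 /eqP h2]]; last first.
  by apply: val_inj; rewrite !icr_val h1 h2.
rewrite !icr_val => /rcons_inj h; move: (congr1 fst h) (congr1 snd h) => /= -> ->; by rewrite !eqxx.
Qed.

Lemma word_eq (s t : word n k) : behead s = behead t -> head 0 s = head 0 t -> s = t.
Proof.
move=> h1 h2; apply: val_inj => /=.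
have hs := size_tuple s; have ht := size_tuple t.
move: h1 h2 hs ht; case: s => s hs0; case: t => t ht0 /=.
case: s hs0 => [|a s'] hs0; first by exfalso; move: hn hs0; case: n.
case: t ht0 => [|b t'] ht0; first by exfalso; move: hn ht0; case: n.
by move=> /= -> ->.
Qed.

Lemma icr_last j (s : word n k) : last 0 (icr j s : seq _) = head 0 s + j%:R.
Proof. by rewrite icr_val last_rcons. Qed.

Lemma icr1_inj : injective (@icr n k 1).
Proof.
move=> s t /eqP; rewrite icr_eq => /andP [/eqP h1 /eqP h2].
by apply: word_eq => //; move: h2 => /addIr.
Qed.
End H.
Lemma icr_shift k n (hn : (0 < n)%N) (s t : word n k) i j i' j' :
  icr i s = icr j t -> (i'%:R - j'%:R = i%:R - j%:R :> 'Z_k) -> icr i' s = icr j' t.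
Proof.
move/eqP; rewrite !icr_eq // => /andP [hb /eqP h] e.
apply/eqP; rewrite icr_eq // hb /=; apply/eqP/eqP; rewrite -subr_eq0.
have -> : (head 0 s + i'%:R) - (head 0 t + j'%:R) =
  (head 0 s + i%:R) - (head 0 t + j%:R) + ((i'%:R - j'%:R) - (i%:R - j%:R)) by ring.
by rewrite h e !subrr addr0.
Qed.
Unset Implicit Arguments.
Theorem lemma10 (k n : nat) (hk : (1 < k)%N) (hn : (0 < n)%N)
  (Root : {set word n k}) (par : {set word n k} -> {set word n k})
  (depth : {set word n k} -> nat) (rep : {set word n k} -> word n k)
  (hRoot : is_cycle Root)
  (hpar : forall U, is_cycle U -> U != Root ->
            is_cycle (par U) /\ arcG (par U) U)
  (hdepth0 : depth Root = 0%N)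
  (hdepthS : forall U, is_cycle U -> U != Root ->
            depth U = (depth (par U)).+1)
  (hrep : forall U, is_cycle U -> U != Root ->
            [/\ rep U \in U,
                exists2 t, t \in par U & icr 0 t = rep U
              & last 0 (rep U : seq 'Z_k) = (depth U)%:R]) :
  bijective (Rsucc Root rep).
Proof.
have consec : forall s (i : nat), icr i s \in Reps Root rep ->
    icr i.+1 s \in Reps Root rep -> (2%:R : 'Z_k) = 0.
  move=> s i /imsetP [U]; rewrite inE => /andP [cU nU] eU.
  move=> /imsetP [V]; rewrite inE => /andP [cV nV] eV.
  have [cP _] := hpar U cU nU.
  have [_ [t tP et] lU] := hrep U cU nU.
  have [rV _ lV] := hrep V cV nV.
  have dU := hdepthS U cU nU.
  have e1 : icr 1 t = icr i.+1 s.
    apply: (@icr_shift _ _ hn _ _ 0 i); first by rewrite et eU.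
    by rewrite -natr1; ring.
  case/existsP: cV => v /eqP Vv; case/existsP: cP => w /eqP Pw.
  move: rV; rewrite [in X in _ \in X]Vv inE => rV.
  move: tP; rewrite Pw inE => tP.
  have wV : fconnect (@icr n k 1) w (rep V).
    by rewrite -eV -e1; apply: connect_trans tP (fconnect1 _ _).
  have vw : fconnect (@icr n k 1) v w.
    apply: connect_trans rV _; by rewrite (fconnect_sym (icr1_inj hn)).
  have VP : V = par U.
    rewrite Vv Pw; apply/setP => y; rewrite !inE.
    by apply: (same_connect (fconnect_sym (icr1_inj hn))).
  move: lU lV; rewrite dU -VP -eU -eV !icr_last // => lU lV.
  move: lU; rewrite -natr1 -lV -natr1 => /eqP; rewrite -subr_eq0 => /eqP h.
  rewrite -oppr0 -h; ring.
have diag : forall j (s t : word n k), icr j s = icr j t -> s = t.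
  move=> j s t /eqP; rewrite icr_eq // => /andP [/eqP h1 /eqP h2].
  by apply: word_eq => //; move: h2 => /addIr.
apply: injF_bij => s t; rewrite /Rsucc.
case: ifP => a0; [|case: ifP => a1]; case: ifP => b0; try case: ifP => b1; move=> H.
- exact: diag H.
- have two : (2%:R : 'Z_k) = 0 by apply: (consec t 1 b1); rewrite -H.
  have H' : icr 0 s = icr 0 t by apply: (icr_shift hn H); rewrite two; ring.
  by rewrite H' b0 in a0.
- by rewrite H b1 in a0.
- have two : (2%:R : 'Z_k) = 0 by apply: (consec s 1 a1); rewrite H.
  have H' : icr 0 s = icr 0 t by apply: (icr_shift hn H); rewrite two; ring.
  by rewrite H' b0 in a0.
- exact: diag H.
- have H' : icr 1 s = icr 0 t by apply: (icr_shift hn H); ring.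
  by rewrite H' b0 in a1.
- by rewrite -H a1 in b0.
- have H' : icr 0 s = icr 1 t by apply: (icr_shift hn H); ring.
  by rewrite H' b1 in a0.
- exact: diag H.
Qed.
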